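(* Let $X$ be a continuous random variable with probability density function $f$ whose support is the interval $(L,R)$, $-\infty\le L<R\le\infty$, and suppose $f$ is decreasing on $(L,R)$. Then for every $p\in\mathcal{D}=\{p\ge1:E[|X|^{p-1}]<\infty\}$, with $\nu_p$ the $p$-mean of $X$ and $H_p=\int_0^{\nu_p-L} y^{p-1} f(\nu_p-y)\,dy$, the density $\frac{1}{H_p}y^{p-1}f(\nu_p+y)\mathbf{1}_{(0,R-\nu_p)}(y)$ exhibits strict stochastic dominance over the density $\frac{1}{H_p}y^{p-1}f(\nu_p-y)\mathbf{1}_{(0,\nu_p-L)}(y)$.
   Context: For $p\ge 1$ and a continuous random variable $X$ with $E[|X|^{p-1}]<\infty$, the $p$-mean $\nu_p$ is the unique real solution $\nu$ of $E[(X-\nu)_+^{p-1}]=E[(\nu-X)_+^{p-1}]$; equivalently $\int_0^{\nu_p-L} y^{p-1} f(\nu_p-y)\,dy=\int_0^{R-\nu_p} y^{p-1} f(\nu_p+y)\,dy$. A distribution with CDF $F_Y$ exhibits strict stochastic dominance over one with CDF $F_Z$ if $F_Z(x)\ge F_Y(x)$ for all $x$ and $F_Z\not\equiv F_Y$. *)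

(* Defs.v *)
From HB Require Import structures.
From mathcomp Require Import all_boot all_order all_algebra.
From mathcomp Require Import all_classical all_reals all_analysis.
Set Implicit Arguments. Unset Strict Implicit. Unset Printing Implicit Defensive.
Import Order.TTheory GRing.Theory Num.Theory.
Local Open Scope classical_set_scope.
Local Open Scope ring_scope.

Section defs.
Variable R : realType.
Local Notation mu := (@lebesgue_measure R).

Definition is_density_with_support (f : R -> R) (L R' : \bar R) : Prop :=
  measurable_fun setT f /\
  (forall x, 0 <= f x) /\
  (\int[mu]_x (f x)%:E = 1)%E /\
  (L < R')%E /\
  (forall x : R, (L < x%:E < R')%E -> 0 < f x) /\
  (forall x : R, ~ (L < x%:E < R')%E -> f x = 0).

Definition decreasing_on (f : R -> R) (L R' : \bar R) : Prop :=
  forall x y : R, (L < x%:E)%E -> x < y -> (y%:E < R')%E -> f y < f x.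

Definition in_D (f : R -> R) (p : R) : Prop :=
  1 <= p /\ mu.-integrable setT (fun x => (powR `|x| (p - 1) * f x)%:E).

Definition left_dom (nu : R) (L : \bar R) : set R :=
  [set y | 0 < y /\ (y%:E < nu%:E - L)%E].
Definition right_dom (nu : R) (R' : \bar R) : set R :=
  [set y | 0 < y /\ (y%:E < R' - nu%:E)%E].

(* nu is the p-mean of X (equivalent integral form given in the paper):
   int_0^{nu-L} y^(p-1) f(nu-y) dy = int_0^{R-nu} y^(p-1) f(nu+y) dy *)
Definition is_pmean (f : R -> R) (L R' : \bar R) (p nu : R) : Prop :=
  (\int[mu]_(y in left_dom nu L) (powR y (p - 1) * f (nu - y))%:E =
   \int[mu]_(y in right_dom nu R') (powR y (p - 1) * f (nu + y))%:E)%E.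

Definition Hp (f : R -> R) (L : \bar R) (p nu : R) : R :=
  fine (\int[mu]_(y in left_dom nu L) (powR y (p - 1) * f (nu - y))%:E)%E.

Definition dens_right (f : R -> R) (L R' : \bar R) (p nu : R) (y : R) : R :=
  (Hp f L p nu)^-1 * powR y (p - 1) * f (nu + y) * \1_(right_dom nu R') y.
Definition dens_left (f : R -> R) (L : \bar R) (p nu : R) (y : R) : R :=
  (Hp f L p nu)^-1 * powR y (p - 1) * f (nu - y) * \1_(left_dom nu L) y.

Definition cdf_of (g : R -> R) (x : R) : \bar R :=
  (\int[mu]_(y in `]-oo, x]) (g y)%:E)%E.

Definition strict_stoch_dom (FY FZ : R -> \bar R) : Prop :=
  (forall x, (FY x <= FZ x)%E) /\ ~ (forall x, FZ x = FY x).
End defs.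

(* Main.v *)
Require Import Defs.
From HB Require Import structures.
From mathcomp Require Import all_boot all_order all_algebra.
From mathcomp Require Import all_classical all_reals all_analysis.
From mathcomp Require Import measurable_realfun lra ring.
Import Order.TTheory GRing.Theory Num.Theory.
Local Open Scope classical_set_scope.
Local Open Scope ring_scope.

Section S.
Context {R : realType}.
Local Notation mu := (@lebesgue_measure R).

Lemma transl_measure (nu : R) (A : set R) : measurable A ->
  pushforward mu (fun y : R => nu - y : measurableTypeR R) A = mu A.
Proof.
move=> mA.
have mphi : measurable_fun setT (fun y : R => nu - y : measurableTypeR R).
  by apply: measurable_funB => //.
apply/esym.
apply: (@lebesgue_measure_unique R (pushforward mu (fun y : R => nu - y : measurableTypeR R))) => //.
move=> _ [[a b]] _ <-.
change (mu `]a, b]%classic = mu ((fun y : R => nu - y) @^-1` `]a, b]%classic)).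
rewrite (_ : (fun y : R => nu - y) @^-1` _ = `[nu - b, nu - a[%classic); last first.
  apply/seteqP; split => y /=; rewrite !in_itv /= => /andP[h1 h2]; apply/andP; split.
  - by rewrite lerBlDr -lerBlDl.
  - by rewrite ltrBrDl -ltrBrDr.
  - by rewrite ltrBrDl -ltrBrDr.
  - by rewrite lerBlDr -lerBlDl.
rewrite !lebesgue_measure_itv/= !lte_fin ltrD2l ltrN2.
by case: ltP => // _; rewrite -!EFinD; congr (_%:E); lra.
Qed.

Lemma cov (nu : R) (D : set R) (F : R -> \bar R) : measurable D ->
  measurable_fun setT F -> (forall x, D x -> (0 <= F x)%E) ->
  (\int[mu]_(x in D) F x = \int[mu]_(y in (fun y : R => (nu - y)%R) @^-1` D) F (nu - y)%R)%E.
Proof.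
move=> mD mF F0.
pose phi := (fun y : measurableTypeR R => (nu - y)%R : measurableTypeR R).
have mphi : measurable_fun setT phi.
  by apply: measurable_funB => //.
transitivity (\int[pushforward mu phi]_(x in D) F x)%E.
  by apply: eq_measure_integral => //= A mA _; rewrite transl_measure.
rewrite (ge0_integral_pushforward mphi) //.
- exact: measurable_funS mF.
- by move=> x /set_mem; exact: F0.
Qed.

Lemma lt_ext_meas (e : \bar R) : measurable [set y : R | (y%:E < e)%E].
Proof.
case: e => [r| |].
- rewrite (_ : [set y : R | _] = `]-oo, r[%classic); first exact: measurable_itv.
  by apply/seteqP; split => y /=; rewrite in_itv /= lte_fin.
- rewrite (_ : [set y : R | _] = setT) //.
  by apply/seteqP; split => y //= _; rewrite ltry.
- rewrite (_ : [set y : R | _] = set0) //.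
  by apply/seteqP; split => y //=; rewrite ltNge leNye.
Qed.

Lemma gt_ext_meas (e : \bar R) : measurable [set y : R | (e < y%:E)%E].
Proof.
case: e => [r| |].
- rewrite (_ : [set y : R | _] = `]r, +oo[%classic); first exact: measurable_itv.
  by apply/seteqP; split => y /=; rewrite in_itv /= lte_fin andbT.
- rewrite (_ : [set y : R | _] = set0) //.
  by apply/seteqP; split => y //=; rewrite ltNge leey.
- rewrite (_ : [set y : R | _] = setT) //.
  by apply/seteqP; split => y //= _; rewrite ltNyr.
Qed.

Lemma ltE_subl (e : \bar R) (y nu : R) :
  (y%:E < nu%:E - e)%E = (e < (nu - y)%:E)%E.
Proof.
case: e => [r| |] /=.
- by rewrite -EFinB !lte_fin; apply/idP/idP => ?; lra.
- by rewrite ltNge leNye /= ltNge leey.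
- by rewrite ltry ltNyr.
Qed.

Lemma ltE_subr (e : \bar R) (y nu : R) :
  (y%:E < e - nu%:E)%E = ((nu + y)%:E < e)%E.
Proof.
case: e => [r| |] /=.
- by rewrite -EFinB !lte_fin; apply/idP/idP => ?; lra.
- by rewrite !ltry.
- by rewrite ltNge leNye /= ltNge leNye.
Qed.

Lemma left_dom_meas (nu : R) L : measurable (left_dom nu L).
Proof.
rewrite /left_dom (_ : [set y | _] = `]0, +oo[%classic `&` [set y : R | (y%:E < nu%:E - L)%E]).
  apply: measurableI; [exact: measurable_itv | exact: lt_ext_meas].
by apply/seteqP; split => y /=; rewrite in_itv /= andbT.
Qed.

Lemma right_dom_meas (nu : R) R' : measurable (right_dom nu R').
Proof.
rewrite /right_dom (_ : [set y | _] = `]0, +oo[%classic `&` [set y : R | (y%:E < R' - nu%:E)%E]).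
  apply: measurableI; [exact: measurable_itv | exact: lt_ext_meas].
by apply/seteqP; split => y /=; rewrite in_itv /= andbT.
Qed.

Lemma pick (e1 e2 : \bar R) : (e1 < e2)%E ->
  exists m1 m2 : R, [/\ (e1 < m1%:E)%E, m1 < m2 & (m2%:E < e2)%E].
Proof.
case: e1 => [r1| |]; case: e2 => [r2| |] //=.
- rewrite lte_fin => h; exists (r1 + (r2 - r1) / 3), (r1 + 2 * (r2 - r1) / 3).
  by split; rewrite ?lte_fin; lra.
- move=> _; exists (r1 + 1), (r1 + 2); split; rewrite ?lte_fin ?ltry //; lra.
- move=> _; exists (r2 - 2), (r2 - 1); split; rewrite ?lte_fin ?ltNyr //; lra.
- move=> _; exists 0, 1; split; rewrite ?ltry ?ltNyr //; lra.
Qed.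

Lemma leb_ab (a b : R) : a <= b -> (mu `[a, b]%classic = (b - a)%:E)%E.
Proof.
move=> ab; rewrite lebesgue_measure_itv /= lte_fin.
case: ltP => [_|ba]; first by rewrite -EFinD.
have -> : b = a by apply/eqP; rewrite eq_le ab ba.
by rewrite subrr.
Qed.

Lemma LB (D : set R) (g : R -> R) (a b dl : R) : measurable D ->
  measurable_fun D g -> (forall x, D x -> 0 <= g x) ->
  `[a, b]%classic `<=` D -> a <= b -> 0 <= dl ->
  (forall x, a <= x <= b -> dl <= g x) ->
  ((dl * (b - a))%:E <= \int[mu]_(x in D) (g x)%:E)%E.
Proof.
move=> mD mg g0 abD ab dl0 hg.
apply: (@le_trans _ _ (\int[mu]_(x in D) (dl%:E * (\1_(`[a, b]%classic) x)%:E))%E).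
  rewrite ge0_integralZl_EFin //; last first.
    by apply/measurable_EFinP; apply: measurable_indic => //; exact: measurable_itv.
  rewrite (@integral_indic _ _ _ mu D mD `[a, b]%classic (measurable_itv _)).
  rewrite setIidl //.
  rewrite [X in (_ <= _ * X)%E](_ : _ = (b - a)%:E); last exact: leb_ab.
  by rewrite -EFinM.
apply: (@ge0_le_integral _ _ _ mu D mD) => //.
- move=> x _; rewrite -EFinM lee_fin; apply: mulr_ge0 => //.
- rewrite (_ : (fun x => _) = (EFin \o (fun x => dl * \1_(`[a, b]%classic) x))); last first.
    by apply/funext => x; rewrite /= EFinM.
  apply/measurable_EFinP; apply: measurable_funM => //.
- by apply/measurable_EFinP.
- move=> x Dx; rewrite -EFinM lee_fin indicE.
  case: (boolP (x \in _)) => [|_]; last by rewrite mulr0 g0.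
  by move=> /set_mem /=; rewrite in_itv /= mulr1 => /hg.
Qed.


Lemma f_lt {f : R -> R} {L R' : \bar R} :
  (forall x : R, (L < x%:E < R')%E -> 0 < f x) ->
  (forall x : R, ~ (L < x%:E < R')%E -> f x = 0) ->
  decreasing_on f L R' ->
  forall u v : R, (L < u%:E)%E -> u < v -> (u%:E < R')%E -> f v < f u.
Proof.
move=> fpos fzero dec u v Lu uv uR.
case: (boolP (v%:E < R')%E) => hv; first exact: dec.
rewrite (fzero v); first by apply: fpos; rewrite Lu uR.
by move=> /andP[_ ]; rewrite (negbTE hv).
Qed.

Lemma f_le {f : R -> R} {L R' : \bar R} :
  (forall x : R, (L < x%:E < R')%E -> 0 < f x) ->
  (forall x : R, ~ (L < x%:E < R')%E -> f x = 0) ->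
  decreasing_on f L R' ->
  forall u v : R, (L < u%:E)%E -> u <= v -> f v <= f u.
Proof.
move=> fpos fzero dec u v Lu; rewrite le_eqVlt => /orP[/eqP <-//|uv].
case: (boolP (u%:E < R')%E) => hu; first exact: (ltW (f_lt fpos fzero dec u v Lu uv hu)).
rewrite (fzero u); last by move=> /andP[_ ]; rewrite (negbTE hu).
rewrite (fzero v) //; move=> /andP[_ vR]; move/negP: hu; apply.
by rewrite (le_lt_trans _ vR)// lee_fin ltW.
Qed.

Lemma pow_bound (p nu x : R) : 1 <= p -> x < nu ->
  powR (nu - x) (p - 1) <= powR (2 * `|nu|) (p - 1) + powR 2 (p - 1) * powR `|x| (p - 1).
Proof.
move=> p1 xnu.
have hp : 0 <= p - 1 by lra.
have h1 := ler_norm nu; have h2 := ler_norm (- x); rewrite normrN in h2.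
have h3 := normr_ge0 x; have h4 := normr_ge0 nu.
have P1 := powR_ge0 (2 * `|nu|) (p - 1).
have P2 := powR_ge0 2 (p - 1); have P3 := powR_ge0 `|x| (p - 1).
case: (lerP `|x| `|nu|) => hx.
- apply: (@le_trans _ _ (powR (2 * `|nu|) (p - 1))); last first.
    by rewrite lerDl mulr_ge0.
  by apply: ge0_ler_powR => //; rewrite ?nnegrE; lra.
- apply: (@le_trans _ _ (powR 2 (p - 1) * powR `|x| (p - 1))); last first.
    by rewrite lerDr.
  rewrite -powRM //.
  by apply: ge0_ler_powR => //; rewrite ?nnegrE; lra.
Qed.


Lemma f_integrable (f : R -> R) : measurable_fun setT f -> (forall x, 0 <= f x) ->
  (\int[mu]_x (f x)%:E = 1)%E -> mu.-integrable setT (fun x => (f x)%:E).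
Proof.
move=> mf f0 f1; apply/integrableP; split; first exact/measurable_EFinP.
under eq_integral do rewrite gee0_abs ?lee_fin //.
by rewrite f1 ltry.
Qed.

Lemma Il_fin (f : R -> R) (L : \bar R) (p nu : R) :
  measurable_fun setT f -> (forall x, 0 <= f x) -> (\int[mu]_x (f x)%:E = 1)%E ->
  1 <= p -> mu.-integrable setT (fun x => (powR `|x| (p - 1) * f x)%:E) ->
  (\int[mu]_(y in left_dom nu L) (powR y (p - 1) * f (nu - y))%:E)%E \is a fin_num.
Proof.
move=> mf f0 f1 p1 intg.
pose D := [set x : R | (L < x%:E)%E] `&` `]-oo, nu[%classic.
have mD : measurable D by apply: measurableI; [exact: gt_ext_meas | exact: measurable_itv].
pose F := fun x : R => (powR (nu - x) (p - 1) * f x)%:E.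
have mF : measurable_fun setT F.
  apply/measurable_EFinP; apply: measurable_funM => //.
  apply: measurableT_comp (measurable_powR _) _.
  by apply: measurable_funB.
have F0 : forall x, D x -> (0 <= F x)%E.
  by move=> x _; rewrite lee_fin mulr_ge0 // powR_ge0.
have -> : (\int[mu]_(y in left_dom nu L) (powR y (p - 1) * f (nu - y))%:E = \int[mu]_(x in D) F x)%E.
  rewrite (cov nu D F mD mF F0).
  have -> : (fun y : R => nu - y) @^-1` D = left_dom nu L.
    apply/seteqP; split => y /=; rewrite /left_dom /D /= in_itv /= ltE_subl.
    - by move=> [h1 h2]; split => //; lra.
    - by move=> [h1 h2]; split => //; lra.
  apply: eq_integral => y _; rewrite /F.
  by have -> : nu - (nu - y) = y by lra.
pose C1 := powR (2 * `|nu|) (p - 1).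
pose C2 := powR 2 (p - 1).
have intG : mu.-integrable setT
    (fun x => (C1%:E * (f x)%:E) + (C2%:E * (powR `|x| (p - 1) * f x)%:E))%E.
  apply: integrableD => //.
  - by apply: integrableZl => //; exact: (f_integrable _ mf f0 f1).
  - by apply: integrableZl => //.
have intF : mu.-integrable D F.
  apply: (@le_integrable _ _ _ mu D mD F (fun x => (C1%:E * (f x)%:E) + (C2%:E * (powR `|x| (p - 1) * f x)%:E))%E (measurable_funS measurableT (@subsetT _ D) mF)); last first.
    exact: (@integrableS _ _ _ mu setT D _ measurableT mD (@subsetT _ D) intG).
    move=> x [_ /=]; rewrite in_itv /= => xnu.
    have fx := f0 x.
    rewrite lee_fin [leLHS]ger0_norm ?mulr_ge0 ?powR_ge0 //.
    apply: le_trans (ler_norm _).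
    have := pow_bound p nu x p1 xnu; rewrite -/C1 -/C2 => hb.
    apply: (@le_trans _ _ ((C1 + C2 * powR `|x| (p - 1)) * f x)).
      exact: ler_wpM2r.
    by rewrite mulrDl mulrA.
exact: integrable_fin_num.
Qed.


Lemma int_indic (A : set R) (g : R -> R) :
  (\int[mu]_x (g x * \1_A x)%:E = \int[mu]_(x in A) (g x)%:E)%E.
Proof.
rewrite [RHS]integral_mkcond; apply: eq_integral => x _.
by rewrite patchE indicE; case: (x \in A) => /=; rewrite ?mulr1 ?mulr0.
Qed.

Lemma int_restr (D : set R) (G : R -> \bar R) : (forall x, ~ D x -> G x = 0%E) ->
  (\int[mu]_(x in D) G x = \int[mu]_x G x)%E.
Proof.
move=> h; rewrite integral_mkcond; apply: eq_integral => x _.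
rewrite patchE; case: ifPn => // /negP xD; rewrite h //.
by move=> Dx; apply: xD; rewrite inE.
Qed.

End S.

Local Notation mu := (@lebesgue_measure _).

Theorem proposition2 (R : realType) (f : R -> R) (L R' : \bar R) :
  is_density_with_support f L R' ->
  decreasing_on f L R' ->
  forall p : R, in_D f p ->
  forall nu : R, is_pmean f L R' p nu ->
  strict_stoch_dom (cdf_of (dens_right f L R' p nu))
                   (cdf_of (dens_left f L p nu)).
Proof.
move=> [mf [f0 [f1 [LR [fpos fzero]]]]] dec p [p1 intg] nu pm.
have hp : 0 <= p - 1 by lra.
pose gl := fun y => powR y (p - 1) * f (nu - y).
pose gr := fun y => powR y (p - 1) * f (nu + y).
have mgl : measurable_fun setT gl.
  apply: measurable_funM; first exact: measurable_powR.
  by apply: measurableT_comp mf _; apply: measurable_funB.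
have mgr : measurable_fun setT gr.
  apply: measurable_funM; first exact: measurable_powR.
  by apply: measurableT_comp mf _; apply: measurable_funD.
have gl0 y : 0 <= gl y by rewrite mulr_ge0 // powR_ge0.
have gr0 y : 0 <= gr y by rewrite mulr_ge0 // powR_ge0.
have mL := left_dom_meas nu L; have mR := right_dom_meas nu R'.
rewrite /is_pmean -/gl -/gr in pm.
have nuL : (L < nu%:E)%E.
  rewrite ltNge; apply/negP => nuL.
  have e0 : left_dom nu L = set0.
    apply/seteqP; split => y //= [y0]; rewrite ltE_subl => Ly.
    have h : ((nu - y)%:E < nu%:E)%E by rewrite lte_fin; lra.
    by have := lt_trans Ly (lt_le_trans h nuL); rewrite ltxx.
  move: pm; rewrite e0 integral_set0 => pm.
  have [m1 [m2 [Lm1 m12 m2R]]] := pick _ _ LR.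
  have num1 : nu < m1 by rewrite -lte_fin; exact: le_lt_trans nuL Lm1.
  have Lm2 : (L < m2%:E)%E by apply: lt_trans Lm1 _; rewrite lte_fin.
  have := @LB R (right_dom nu R') gr (m1 - nu) (m2 - nu) (powR (m1 - nu) (p - 1) * f m2) mR
    (measurable_funS measurableT (@subsetT _ _) mgr) (fun y _ => gr0 y).
  move=> /(_ _ _ _ _) h.
  have : (((powR (m1 - nu) (p - 1) * f m2) * ((m2 - nu) - (m1 - nu)))%:E <= 0)%E.
    rewrite pm; apply: h.
    - move=> y /=; rewrite in_itv /= => /andP[h1 h2]; split; first lra.
      by rewrite ltE_subr; apply: le_lt_trans m2R; rewrite lee_fin; lra.
    - lra.
    - by rewrite mulr_ge0 // powR_ge0.
    - move=> y /andP[h1 h2]; rewrite /gr; apply: ler_pM => //; first exact: powR_ge0.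
        by apply: ge0_ler_powR => //; rewrite nnegrE; lra.
      apply: (f_le fpos fzero dec) => //; last lra.
      by apply: lt_le_trans Lm1 _; rewrite lee_fin; lra.
  rewrite lee_fin leNgt => /negP; apply; apply: mulr_gt0; last lra.
  apply: mulr_gt0; first by apply: powR_gt0; lra.
  by apply: fpos; rewrite Lm2 m2R.
have LRm : (L < Order.min nu%:E R')%E by rewrite lt_min nuL LR.
have [m1 [m2 [Lm1 m12 m2m]]] := pick _ _ LRm.
move: m2m; rewrite lt_min => /andP[m2nu m2R].
rewrite lte_fin in m2nu.
have Lm2 : (L < m2%:E)%E by apply: lt_trans Lm1 _; rewrite lte_fin.
pose a := nu - m2; pose b := nu - m1.
have a0 : 0 < a by rewrite /a; lra.
have ab : a < b by rewrite /a /b; lra.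
have sub_ab : `[a, b]%classic `<=` left_dom nu L.
  move=> y /=; rewrite in_itv /= => /andP[h1 h2]; split; first lra.
  by rewrite ltE_subl; apply: lt_le_trans Lm1 _; rewrite lee_fin /b in h2 *; lra.
have fm2 : 0 < f m2 by apply: fpos; rewrite Lm2 m2R.
have glb y : a <= y <= b -> powR a (p - 1) * f m2 <= gl y.
  move=> /andP[h1 h2]; rewrite /gl; apply: ler_pM => //; first exact: powR_ge0.
    by apply: ge0_ler_powR => //; rewrite nnegrE; lra.
  apply: (f_le fpos fzero dec) => //; last by rewrite /a in h1; lra.
  by apply: lt_le_trans Lm1 _; rewrite lee_fin /b in h2 *; lra.
have Ilpos : (0 < \int[mu]_(y in left_dom nu L) (gl y)%:E)%E.
  apply: lt_le_trans (LB (left_dom nu L) gl a b (powR a (p - 1) * f m2) mL (measurable_funS measurableT (@subsetT _ _) mgl)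
     (fun y _ => gl0 y) sub_ab (ltW ab) _ glb); last first.
    by rewrite mulr_ge0 // powR_ge0.
  rewrite lte_fin; apply: mulr_gt0; last lra.
  by rewrite mulr_gt0 // powR_gt0.
have Ilfin : (\int[mu]_(y in left_dom nu L) (gl y)%:E)%E \is a fin_num.
  exact: (Il_fin _ _ _ _ mf f0 f1 p1 intg).
set Il := (\int[mu]_(y in left_dom nu L) (gl y)%:E)%E in Ilpos Ilfin pm.
pose h := fine Il.
have Ilh : Il = h%:E by rewrite /h fineK.
have h0 : 0 < h by rewrite -lte_fin -Ilh.
have nuR : (nu%:E < R')%E.
  rewrite ltNge; apply/negP => Rnu.
  have e0 : right_dom nu R' = set0.
    apply/seteqP; split => y //= [y0]; rewrite ltE_subr => yR.
    have hh : (nu%:E < (nu + y)%:E)%E by rewrite lte_fin; lra.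
    by have := lt_trans hh (lt_le_trans yR Rnu); rewrite ltxx.
  by move: pm; rewrite e0 integral_set0 => pm; move: Ilpos; rewrite pm ltxx.
pose c := h^-1.
have c0 : 0 < c by rewrite invr_gt0.
have Hph : Hp f L p nu = h by [].
have dl_eq y : dens_left f L p nu y = c * (gl y * \1_(left_dom nu L) y).
  by rewrite /dens_left Hph /gl /c; ring.
have dr_eq y : dens_right f L R' p nu y = c * (gr y * \1_(right_dom nu R') y).
  by rewrite /dens_right Hph /gr /c; ring.
have ind0 (A : set R) y : (0 <= \1_A y :> R) by rewrite indicE ler0n.
have ind1 (A : set R) y : (\1_A y <= 1 :> R) by rewrite indicE; case: (_ \in _); rewrite ?ler01 ?lexx.
have dl0 y : 0 <= dens_left f L p nu y by rewrite dl_eq; apply: mulr_ge0; [exact: ltW | exact: mulr_ge0].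
have dr0 y : 0 <= dens_right f L R' p nu y by rewrite dr_eq; apply: mulr_ge0; [exact: ltW | exact: mulr_ge0].
have mdl : measurable_fun setT (dens_left f L p nu).
  rewrite (_ : dens_left f L p nu = fun y => c * (gl y * \1_(left_dom nu L) y)); last first.
    by apply/funext => y; rewrite dl_eq.
  apply: measurable_funM => //; apply: measurable_funM => //.
  all: try exact: measurable_indic.
have mdr : measurable_fun setT (dens_right f L R' p nu).
  rewrite (_ : dens_right f L R' p nu = fun y => c * (gr y * \1_(right_dom nu R') y)); last first.
    by apply/funext => y; rewrite dr_eq.
  apply: measurable_funM => //; apply: measurable_funM => //.
  all: try exact: measurable_indic.
have Tl : (\int[mu]_x (dens_left f L p nu x)%:E = 1)%E.
  under eq_integral do rewrite dl_eq EFinM.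
  rewrite ge0_integralZl_EFin //; last 3 first.
  - by move=> y _; rewrite lee_fin mulr_ge0.
  - apply/measurable_EFinP; apply: measurable_funM => //; exact: measurable_indic.
  - exact: ltW.
  by rewrite int_indic -/Il Ilh -EFinM mulVf // gt_eqF.
have Tr : (\int[mu]_x (dens_right f L R' p nu x)%:E = 1)%E.
  under eq_integral do rewrite dr_eq EFinM.
  rewrite ge0_integralZl_EFin //; last 3 first.
  - by move=> y _; rewrite lee_fin mulr_ge0.
  - apply/measurable_EFinP; apply: measurable_funM => //; exact: measurable_indic.
  - exact: ltW.
  by rewrite int_indic -pm Ilh -EFinM mulVf // gt_eqF.
have P y : (y%:E < nu%:E - L)%E -> dens_right f L R' p nu y <= dens_left f L p nu y.
  move=> hy; rewrite dl_eq dr_eq; apply: ler_wpM2l; first exact: ltW.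
  rewrite !indicE; case: (boolP (y \in right_dom nu R')) => [/set_mem [y0 yR]|_]; last first.
    by rewrite mulr0 mulr_ge0.
  have -> : y \in left_dom nu L by apply/mem_set.
  rewrite !mulr1 /gl /gr; apply: ler_wpM2l; first exact: powR_ge0.
  rewrite ltE_subl in hy.
  by apply: (f_le fpos fzero dec) => //; lra.
have cdfr1 x : (cdf_of (dens_right f L R' p nu) x <= 1)%E.
  rewrite /cdf_of -Tr; apply: (@ge0_subset_integral _ _ _ mu _ _ (measurable_itv `]-oo, x]) measurableT) => //.
  - exact/measurable_EFinP.
  - by move=> y _; rewrite lee_fin.
split.
- move=> x; rewrite /cdf_of.
  case: (boolP (x%:E < nu%:E - L)%E) => hx.
    apply: (@ge0_le_integral _ _ _ mu _ (measurable_itv `]-oo, x])) => //.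
    - by move=> y _; rewrite lee_fin.
    - by apply/measurable_EFinP; exact: (measurable_funS measurableT (@subsetT _ _) mdr).
    - by apply/measurable_EFinP; exact: (measurable_funS measurableT (@subsetT _ _) mdl).
    - move=> y /=; rewrite in_itv /= => yx; rewrite lee_fin; apply: P.
      by apply: le_lt_trans hx; rewrite lee_fin.
  rewrite [leRHS](int_restr `]-oo, x]%classic); last first.
    move=> y /=; rewrite in_itv /= => /negP; rewrite -ltNge => xy.
    rewrite dl_eq indicE.
    have -> : (y \in left_dom nu L) = false.
      apply/negP => /set_mem [_ yl]; move: hx; apply/negP; rewrite negbK.
      by apply: lt_trans yl; rewrite lte_fin.
    by rewrite mulr0 mulr0.
  by rewrite Tl; exact: cdfr1.
move=> Heq.
have Lna : (L < (nu + a)%:E)%E by apply: lt_trans nuL _; rewrite lte_fin; lra.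
have fna : f (nu + a) < f m2.
  by apply: (f_lt fpos fzero dec) => //; rewrite /a; lra.
pose d2 := powR a (p - 1) * (f m2 - f (nu + a)).
have d20 : 0 < d2 by rewrite mulr_gt0 ?powR_gt0 //; lra.
have cd0 : 0 <= c * d2 by rewrite mulr_ge0 // ltW.
have Q y : y <= b -> dens_right f L R' p nu y + c * d2 * \1_(`[a, b]%classic) y
                     <= dens_left f L p nu y.
  move=> yb; rewrite indicE.
  case: (boolP (y \in `[a, b]%classic)) => [/set_mem /= |_]; last first.
    rewrite mulr0 addr0; apply: P; rewrite ltE_subl.
    by apply: lt_le_trans Lm1 _; rewrite lee_fin /b in yb *; lra.
  rewrite in_itv /= => /andP[h1 h2]; rewrite mulr1 dl_eq dr_eq.
  have yl : y \in left_dom nu L.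
    by apply/mem_set; apply: sub_ab; rewrite /= in_itv /= h1 h2.
  rewrite [X in _ <= c * (_ * X)]indicE yl mulr1.
  have Pa0 := powR_ge0 a (p - 1).
  have PaP : powR a (p - 1) <= powR y (p - 1).
    by apply: ge0_ler_powR => //; rewrite nnegrE; lra.
  have f1' : f m2 <= f (nu - y).
    apply: (f_le fpos fzero dec) => //; last by rewrite /a in h1; lra.
    by apply: lt_le_trans Lm1 _; rewrite lee_fin /b in h2 *; lra.
  have f2' : f (nu + y) <= f (nu + a) by apply: (f_le fpos fzero dec) => //; lra.
  have I1 := ind1 (right_dom nu R') y; have I0 := ind0 (right_dom nu R') y.
  have fy := f0 (nu + y).
  have Py0 := powR_ge0 y (p - 1).
  have k1 : gr y * \1_(right_dom nu R') y <= gr y.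
    by rewrite ler_piMr // mulr_ge0.
  have k2 : d2 <= powR y (p - 1) * (f (nu - y) - f (nu + y)).
    by rewrite /d2; apply: ler_pM => //; lra.
  have key : gr y * \1_(right_dom nu R') y + d2 <= gl y.
    by rewrite /gl; move: k1 k2; rewrite /gr; lra.
  have cc := ltW c0.
  by apply: le_trans (ler_wpM2l cc key); rewrite mulrDr lexx.
have mI : measurable `]-oo, b]%classic := measurable_itv _.
have mdrI : measurable_fun `]-oo, b]%classic (fun y => (dens_right f L R' p nu y)%:E).
  by apply/measurable_EFinP; exact: (measurable_funS measurableT (@subsetT _ _) mdr).
have mdlI : measurable_fun `]-oo, b]%classic (fun y => (dens_left f L p nu y)%:E).
  by apply/measurable_EFinP; exact: (measurable_funS measurableT (@subsetT _ _) mdl).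
have mindI : measurable_fun `]-oo, b]%classic (fun y => (c * d2)%:E * (\1_(`[a, b]%classic) y)%:E)%E.
  apply: measurable_funeM; apply/measurable_EFinP.
  by apply: measurable_indic; exact: measurable_itv.
have Eind : (\int[mu]_(y in `]-oo, b]) ((c * d2)%:E * (\1_(`[a, b]%classic) y)%:E) = (c * d2 * (b - a))%:E)%E.
  rewrite ge0_integralZl_EFin //; last first.
    by apply/measurable_EFinP; apply: measurable_indic; exact: measurable_itv.
  rewrite (@integral_indic _ _ _ mu _ mI `[a, b]%classic (measurable_itv _)).
  rewrite setIidl; last first.
    by move=> y /=; rewrite !in_itv /= => /andP[].
  rewrite [X in (_ * X = _)%E](_ : _ = (b - a)%:E); last exact: leb_ab (ltW ab).
  by rewrite -EFinM.
have ED : (\int[mu]_(y in `]-oo, b]) ((dens_right f L R' p nu y)%:E + (c * d2)%:E * (\1_(`[a, b]%classic) y)%:E) =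
   \int[mu]_(y in `]-oo, b]) (dens_right f L R' p nu y)%:E +
   \int[mu]_(y in `]-oo, b]) ((c * d2)%:E * (\1_(`[a, b]%classic) y)%:E))%E.
  apply: (@ge0_integralD _ _ _ mu _ mI) => //.
  - by move=> y _; rewrite lee_fin.
  - by move=> y _; rewrite -EFinM lee_fin mulr_ge0.
have I1 : (cdf_of (dens_right f L R' p nu) b + (c * d2 * (b - a))%:E
           <= cdf_of (dens_left f L p nu) b)%E.
  rewrite /cdf_of -Eind -ED.
  apply: (@ge0_le_integral _ _ _ mu _ mI) => //.
  - by move=> y _; apply: adde_ge0; [rewrite lee_fin | apply: mule_ge0; rewrite lee_fin].
  - exact: emeasurable_funD.
move: I1; rewrite (Heq b).
have r0 : (0 <= cdf_of (dens_right f L R' p nu) b)%E.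
  by apply: integral_ge0 => y _; rewrite lee_fin.
have r1 := cdfr1 b.
have rfin : cdf_of (dens_right f L R' p nu) b \is a fin_num.
  rewrite fin_numElt; apply/andP; split.
  - exact: lt_le_trans (ltNyr 0) r0.
  - exact: le_lt_trans r1 (ltry 1).
rewrite -(fineK rfin) -EFinD lee_fin => hh.
have : 0 < c * d2 * (b - a) by apply: mulr_gt0; [exact: mulr_gt0 | rewrite subr_gt0].
lra.
Qed.
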